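(* Let $\mathcal C\subseteq\{0,1\}^n$ and $\mathcal D\subseteq\{0,1\}^m$ be neural codes and $\phi:R_\mathcal D\to R_\mathcal C$ a ring isomorphism. Then $\phi$ is a neural ring isomorphism if and only if the associated code map $q_\phi:\mathcal C\to\mathcal D$ is a permutation of labels, i.e. $m=n$ and there is a permutation $\sigma$ of $[n]$ such that $q_\phi(c)=(c_{\sigma(1)},\dots,c_{\sigma(n)})$ for all $c\in\mathcal C$ and $q_\phi$ is a bijection onto $\mathcal D$.
   Context: For a code $\mathcal C\subseteq\{0,1\}^n$, $R_\mathcal C$ is the ring of all functions $\mathcal C\to\mathbb F_2$, and $R[n]=R_{\{0,1\}^n}=\mathbb F_2[x_1,\dots,x_n]/\langle x_i^2-x_i\rangle$; $R_\mathcal C$ is an $R[n]$-module via $(r\cdot f)(c)=r(c)f(c)$. $\rho_c$ denotes the indicator function of $\{c\}$. For a ring homomorphism $\phi:R_\mathcal D\to R_\mathcal C$, the associated code map $q_\phi:\mathcal C\to\mathcal D$ sends $c$ to the unique $d\in\mathcal D$ with $\phi(\rho_d)(c)=1$. A ring homomorphism $\tau:R[m]\to R[n]$ is compatible with $\phi$ if $\phi(r\cdot f)=\tau(r)\cdot\phi(f)$ for all $r\in R[m]$, $f\in R_\mathcal D$; it is linear-monomial if $\tau(x_i)\in\{x_1,\dots,x_n,0,1\}$ for all $i$. A neural ring isomorphism is a ring isomorphism $\phi:R_\mathcal D\to R_\mathcal C$ for which there exists a compatible linear-monomial ring isomorphism $\tau:R[m]\to R[n]$. *)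

(* Defs.v *)
From HB Require Import structures.
From mathcomp Require Import all_boot all_order all_algebra all_fingroup.
Set Implicit Arguments. Unset Strict Implicit. Unset Printing Implicit Defensive.
Import GRing.Theory.
Local Open Scope ring_scope.

Definition word (n : nat) : finType := {ffun 'I_n -> bool}.

Definition codeT (n : nat) (C : {set word n}) : finType := {c : word n | c \in C}.

Definition RC (n : nat) (C : {set word n}) : pzRingType := {ffun codeT C -> 'F_2}.

(* R[n] = R_{{0,1}^n} : functions {0,1}^n -> F_2, which is
   F_2[x_1..x_n]/<x_i^2 - x_i>; x_i is the i-th coordinate function. *)
Definition Rn (n : nat) : pzRingType := {ffun word n -> 'F_2}.

Definition xvar (n : nat) (i : 'I_n) : Rn n := [ffun v : word n => (v i : nat)%:R].

Definition rho (n : nat) (C : {set word n}) (c : codeT C) : RC C :=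
  [ffun c' => (c' == c : nat)%:R].

Definition act (n : nat) (C : {set word n}) (r : Rn n) (f : RC C) : RC C :=
  [ffun c => r (val c) * f c].

(* The code map q_phi : C -> D, c |-> the unique d in D with phi(rho_d)(c) = 1.
   (Default value used only if no such d exists, which never happens for
   ring homomorphisms.) *)
Definition qmap (n m : nat) (C : {set word n}) (D : {set word m})
  (phi : RC D -> RC C) (c : codeT C) : word m :=
  odflt [ffun _ => false]
    (omap val [pick d : codeT D | phi (rho d) c == 1]).

Definition compatible (n m : nat) (C : {set word n}) (D : {set word m})
  (phi : RC D -> RC C) (tau : Rn m -> Rn n) : Prop :=
  forall (r : Rn m) (f : RC D), phi (act r f) = act (tau r) (phi f).

Definition linear_monomial (n m : nat) (tau : Rn m -> Rn n) : Prop :=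
  forall i : 'I_m, (exists j : 'I_n, tau (xvar i) = xvar j)
                   \/ tau (xvar i) = 0 \/ tau (xvar i) = 1.

Definition neural_ring_iso (n m : nat) (C : {set word n}) (D : {set word m})
  (phi : {rmorphism RC D -> RC C}) : Prop :=
  bijective phi /\
  exists tau : {rmorphism Rn m -> Rn n},
    bijective tau /\ linear_monomial tau /\ compatible phi tau.

Definition perm_of_labels (n m : nat) (C : {set word n}) (D : {set word m})
  (q : codeT C -> word m) : Prop :=
  exists (e : m = n) (sigma : 'S_n),
    (forall c : codeT C, q c = [ffun j : 'I_m => val c (sigma (cast_ord e j))])
    /\ (forall c, q c \in D)
    /\ injective q
    /\ (forall d, d \in D -> exists c, q c = d).

(* Main.v *)
Require Import Defs.
From HB Require Import structures.
From mathcomp Require Import all_boot all_order all_algebra all_fingroup.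
Import GRing.Theory.
Local Open Scope ring_scope.
Set Implicit Arguments. Unset Strict Implicit.

Lemma F2_cases (x : 'F_2) : x = 0 \/ x = 1.
Proof. case: x => -[|[|k]] Hk; [left|right|]; try exact: val_inj; by []. Qed.

Lemma natb_inj (b1 b2 : bool) : (b1 : nat)%:R = (b2 : nat)%:R :> 'F_2 -> b1 = b2.
Proof. by case: b1; case: b2 => //= /eqP; rewrite ?oner_eq0 // eq_sym oner_eq0. Qed.

Lemma ffmulE (T : finType) (f g : {ffun T -> 'F_2}) x : (f * g) x = f x * g x.
Proof. by rewrite /GRing.mul /= ffunE. Qed.
Lemma ff1E (T : finType) x : (1 : {ffun T -> 'F_2}) x = 1.
Proof. by rewrite /GRing.one /= ffunE. Qed.
Lemma ff0E (T : finType) x : (0 : {ffun T -> 'F_2}) x = 0.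
Proof. by rewrite /GRing.zero /= ffunE. Qed.
Lemma ffnatE (T : finType) k x : (k%:R : {ffun T -> 'F_2}) x = k%:R.
Proof. by rewrite ffunMnE ff1E. Qed.

Lemma key n m (C : {set word n}) (D : {set word m})
  (phi : {rmorphism RC D -> RC C}) (c : codeT C) :
  exists d0 : codeT D, forall g, phi g c = g d0.
Proof.
have hsum : \sum_d rho d = 1 :> RC D.
  apply/ffunP => x; rewrite sum_ffunE ff1E (bigD1 x) //= big1 => [|y hy].
    by rewrite ffunE eqxx addr0.
  by rewrite ffunE eq_sym (negbTE hy).
have hs : \sum_d phi (rho d) c = 1.
  by rewrite -sum_ffunE -rmorph_sum hsum rmorph1 ff1E.
have [d0 Hd0] : exists d0, phi (rho d0) c = 1.
  case: (pickP (fun d => phi (rho d) c == 1)) => [d0 /eqP H|H]; first by exists d0.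
  move: hs; rewrite big1 => [/eqP|d _]; first by rewrite eq_sym oner_eq0.
  case: (F2_cases (phi (rho d) c)) => // h; move: (H d); by rewrite h eqxx.
exists d0 => g.
have HM := congr1 (fun f : {ffun codeT C -> 'F_2} => f c) (rmorphM phi (rho d0) g); simpl in HM.
case: (F2_cases (g d0)) => h.
- have E: rho d0 * g = 0.
    apply/ffunP=> x; rewrite ffmulE ff0E ffunE; case: eqP => [->|_].
      by rewrite h mulr0.
    by rewrite mul0r.
  by move: HM; rewrite E rmorph0 ff0E ffmulE Hd0 mul1r h.
- have E: rho d0 * g = rho d0.
    apply/ffunP=> x; rewrite ffmulE !ffunE; case: eqP => [->|_].
      by rewrite h mulr1.
    by rewrite mul0r.
  by move: HM; rewrite E ffmulE Hd0 mul1r h.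
Qed.

Lemma qmapE n m (C : {set word n}) (D : {set word m})
  (phi : {rmorphism RC D -> RC C}) (c : codeT C) (d0 : codeT D) :
  (forall g, phi g c = g d0) -> qmap phi c = val d0.
Proof.
move=> H; rewrite /qmap; case: pickP => [d /eqP|].
  by rewrite H ffunE; case: eqP => [->|_] //= /eqP; rewrite eq_sym oner_eq0.
by move=> /(_ d0); rewrite H ffunE eqxx.
Qed.

Lemma qbij n m (C : {set word n}) (D : {set word m})
  (phi : {rmorphism RC D -> RC C}) : bijective phi ->
  (forall c, qmap phi c \in D) /\ injective (qmap phi) /\
  (forall d, d \in D -> exists c, qmap phi c = d).
Proof.
move=> bphi; split; [|split].
- by move=> c; have [d0 H] := key phi c; rewrite (qmapE H); exact: valP.
- move=> c1 c2; have [d1 H1] := key phi c1; have [d2 H2] := key phi c2.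
  rewrite (qmapE H1) (qmapE H2) => /val_inj E; subst d2.
  case: bphi => psi K1 K2.
  have e1 := H1 (psi (rho c1)); have e2 := H2 (psi (rho c1)).
  rewrite K2 in e1 e2.
  move: e2; rewrite -e1 !ffunE eqxx => /natb_inj E.
  by apply/eqP; rewrite eq_sym E.
- move=> d Hd; pose dd : codeT D := exist _ d Hd.
  case: (boolP [exists c, qmap phi c == d]) => [/existsP [c /eqP <-]|/existsPn H].
    by exists c.
  exfalso.
  have : phi (rho dd) = 0.
    apply/ffunP => c; have [d0 H0] := key phi c; rewrite H0 ff0E ffunE.
    case: eqP => // E; move: (H c); by rewrite (qmapE H0) E /= eqxx.
  rewrite -(rmorph0 phi) => /(bij_inj bphi).
  move=> /(congr1 (fun f : {ffun codeT D -> 'F_2} => f dd)).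
  by rewrite ffunE eqxx ff0E => /eqP; rewrite oner_eq0.
Qed.

Definition pw n (s : 'S_n) (v : word n) : word n := [ffun j => v (s j)].
Definition taufun n (s : 'S_n) (r : Rn n) : Rn n := [ffun v => r (pw s v)].

Lemma taufun_zmod n (s : 'S_n) : zmod_morphism (taufun s).
Proof. by move=> x y; apply/ffunP => v; rewrite /GRing.add /GRing.opp /= !ffunE. Qed.
Lemma taufun_mon n (s : 'S_n) : monoid_morphism (taufun s).
Proof.
split; first by apply/ffunP => v; rewrite /GRing.one /= !ffunE.
by move=> x y; apply/ffunP => v; rewrite /GRing.mul /= !ffunE.
Qed.
HB.instance Definition _ n s := GRing.isZmodMorphism.Build (Rn n) (Rn n) (@taufun n s) (@taufun_zmod n s).
HB.instance Definition _ n s := GRing.isMonoidMorphism.Build (Rn n) (Rn n) (@taufun n s) (@taufun_mon n s).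
Definition taurm n (s : 'S_n) : {rmorphism Rn n -> Rn n} := taufun s.

Lemma xvar_inj n (j1 j2 : 'I_n) : xvar j1 = xvar j2 -> j1 = j2.
Proof.
move=> /(congr1 (fun f : {ffun word n -> 'F_2} => f [ffun k => k == j1])).
rewrite !ffunE eqxx => /natb_inj E; apply/eqP; by rewrite eq_sym -E.
Qed.

Unset Implicit Arguments.

Theorem corollary1 (n m : nat) (C : {set word n}) (D : {set word m})
  (phi : {rmorphism RC D -> RC C}) :
  bijective phi ->
  (neural_ring_iso phi <-> @perm_of_labels n m C D (qmap phi)).
Proof.
move=> bphi; have [Q1 [Q2 Q3]] := qbij bphi; split.
- case=> _ [tau [btau [lm comp]]].
  have Emn : m = n.
    have := @bij_eq_card {ffun word m -> 'F_2} {ffun word n -> 'F_2} tau btau; move=> H; move: H.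
    idtac.
    move=> H; have : #|{ffun word m -> 'F_2}| = (2 ^ (2 ^ m))%N by rewrite card_ffun card_Fp // card_ffun card_bool card_ord.
    have : #|{ffun word n -> 'F_2}| = (2 ^ (2 ^ n))%N by rewrite card_ffun card_Fp // card_ffun card_bool card_ord.
    move=> E1 E2; move: H; rewrite E1 E2.
    by move/eqP; rewrite eqn_exp2l // eqn_exp2l // => /eqP.
  subst m.
  have x0 : forall i : 'I_n, xvar i != 0.
    move=> i; apply/eqP.
    move=> /(congr1 (fun f : {ffun word n -> 'F_2} => f [ffun => true])).
    by rewrite !ffunE ?ff0E /= => /eqP; rewrite oner_eq0.
  have x1 : forall i : 'I_n, xvar i != 1.
    move=> i; apply/eqP.
    move=> /(congr1 (fun f : {ffun word n -> 'F_2} => f [ffun => false])).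
    by rewrite !ffunE ?ff1E /= => /eqP; rewrite eq_sym oner_eq0.
  have Hpi : forall i, exists j, tau (xvar i) = xvar j.
    move=> i; case: (lm i) => [//|[]] h.
      by move/eqP: (x0 i); case; apply: (bij_inj btau); rewrite h rmorph0.
    by move/eqP: (x1 i); case; apply: (bij_inj btau); rewrite h rmorph1.
  have [pi Hpi'] := fin_all_exists Hpi.
  have pi_inj : injective pi.
    move=> i1 i2 E; apply: xvar_inj; apply: (bij_inj btau).
    by rewrite !Hpi' E.
  exists erefl, (perm pi_inj); split => //.
  move=> c; have [d0 Hd0] := key phi c; rewrite (qmapE Hd0).
  apply/ffunP => j; rewrite !ffunE cast_ord_id permE.
  have := congr1 (fun f : {ffun codeT C -> 'F_2} => f c) (comp (xvar j) 1).
  rewrite /= Hd0 Hpi' rmorph1 !ffunE ?ff1E !mulr1.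
  exact: natb_inj.
- case=> e [s [Hq _]]; subst n; split => //.
  exists (taurm s); split; [|split].
  + exists (taurm s^-1) => r; apply/ffunP => v; rewrite /= !ffunE; congr (r _);
      apply/ffunP => j; by rewrite !ffunE ?permK ?permKV.
  + by move=> i; left; exists (s i); apply/ffunP => v; rewrite /= !ffunE.
  + move=> r f; apply/ffunP => c; have [d0 Hd0] := key phi c.
    rewrite Hd0 !ffunE Hd0 /=.
    congr (r _ * _); rewrite -[sval d0]/(val d0) -(qmapE Hd0) Hq.
    apply/ffunP => j; by rewrite !ffunE cast_ord_id.
Qed.
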